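(* Let $n=p^k$, where $p$ is an odd prime and $k>2$ is an integer, and let $G=\langle p^{k-1}-1\rangle$ be the subgroup of $\mathbb{Z}_n^\times$ generated by $p^{k-1}-1$. Then the coset index function $f_G$ is a $\left(p^k,\frac{2p^{k-1}-p^{k-2}+1}{2},\{1,p,p^k-p^{k-1}+1\}\right)$ zero-difference function.
   Context: For a subgroup $G$ of $\mathbb{Z}_n^\times$ and $r\in\mathbb{Z}_n$, the coset $rG=\{rg\mid g\in G\}$; these cosets partition $\mathbb{Z}_n$, forming a set $D_G$. The coset index function induced by $G$ is $f_G:\mathbb{Z}_n\to\mathbb{Z}_{|D_G|}$, $f_G(x)=h_G(C_x)$, where $C_x$ is the coset containing $x$ and $h_G:D_G\to\mathbb{Z}_{|D_G|}$ is a fixed bijection. A function $f:A\to B$ between finite abelian groups is an $(n,m,S)$ zero-difference function if $n=|A|$, $m=|f(A)|$, and for every nonzero $a\in A$, $|\{x\in A\mid f(x+a)=f(x)\}|\in S$. Here $A=(\mathbb{Z}_n,+)$. *)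

(* Defs.v *)
From HB Require Import structures.
From mathcomp Require Import all_boot all_order all_algebra all_fingroup.
Set Implicit Arguments. Unset Strict Implicit. Unset Printing Implicit Defensive.
Import GRing.Theory.
Local Open Scope ring_scope.

Definition ucoset (n : nat) (G : {set {unit 'Z_n}}) (r : 'Z_n) : {set 'Z_n} :=
  [set r * val g | g in G].

Definition cosets (n : nat) (G : {set {unit 'Z_n}}) : {set {set 'Z_n}} :=
  [set ucoset G r | r : 'Z_n].

(* The coset containing x (for G a group, this is xG since 1 \in G). *)
Definition coset_containing (n : nat) (G : {set {unit 'Z_n}}) (x : 'Z_n) : {set 'Z_n} :=
  pblock (cosets G) x.

(* Coset index function f_G(x) = h_G(C_x), for a bijection h : D_G -> Z_|D_G|. *)
Definition coset_index_fun (n : nat) (G : {set {unit 'Z_n}})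
  (h : {set 'Z_n} -> 'I_#|cosets G|) (x : 'Z_n) : 'I_#|cosets G| :=
  h (coset_containing G x).

Definition zero_difference (A : finZmodType) (B : finType) (f : A -> B)
  (N m : nat) (S : pred nat) : Prop :=
  [/\ N = #|A|, m = #|[set f x | x : A]|
    & forall a : A, a != 0 -> S #|[set x : A | f (x + a) == f x]| ].

(* Main.v *)
Require Import Defs.
From HB Require Import structures.
From mathcomp Require Import all_boot all_order all_algebra all_fingroup.
From mathcomp Require Import zify ring.
Set Implicit Arguments. Unset Strict Implicit. Unset Printing Implicit Defensive.
Import GRing.Theory.

Section S.
Variables p k : nat.
Hypotheses (pp : prime p) (op : odd p) (k2 : 2 < k).
Local Notation R := 'Z_(p ^ k).

Lemma N1 : 1 < p ^ k.
Proof. by rewrite -(expn0 p) ltn_exp2l ?prime_gt1 //; lia. Qed.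

Lemma valn (n : nat) : val (n%:R : R)%R = n %% p ^ k.
Proof. exact: val_Zp_nat N1 n. Qed.

Lemma natZ0 (n : nat) : ((n%:R : R) == 0)%R = (p ^ k %| n).
Proof. by apply/eqP/idP => [/(congr1 val)|H]; [rewrite valn /= => /eqP | apply: val_inj; rewrite valn /=; apply/eqP]. Qed.

Lemma natrv (x : R) : ((val x)%:R)%R = x.
Proof. exact: natr_Zp. Qed.

Local Notation e := ((p ^ k.-1)%:R : R)%R.

Lemma pk : p ^ k = p * p ^ k.-1.
Proof. by rewrite -expnS prednK //; lia. Qed.

Lemma ee0 : (e * e = 0)%R.
Proof. apply/eqP; rewrite -natrM natZ0 -expnD dvdn_exp2l //; lia. Qed.

Lemma pe0 : ((p%:R : R) * e = 0)%R.
Proof. by apply/eqP; rewrite -natrM natZ0 -pk. Qed.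

Lemma unitE (x : R) : (x \is a GRing.unit) = ~~ (p %| val x).
Proof.
rewrite -{1}(natrv x) unitZpE ?N1 // coprime_pexpl; last lia.
by rewrite prime_coprime.
Qed.

Lemma xe0 (x : R) : ((x * e) == 0)%R = ~~ (x \is a GRing.unit).
Proof.
have H m : (p ^ k %| m * p ^ k.-1) = (p %| m).
  by rewrite pk dvdn_pmul2r // expn_gt0 prime_gt0.
by rewrite unitE negbK -{1}(natrv x) -natrM natZ0 H.
Qed.

Lemma te_inj (t t' : nat) : t < p -> t' < p -> ((t%:R : R) * e = t'%:R * e)%R -> t = t'.
Proof.
move=> ht ht' /(congr1 val); rewrite -!natrM !valn !modn_small; last first.
- by rewrite pk ltn_pmul2r // expn_gt0 prime_gt0.
- by rewrite pk ltn_pmul2r // expn_gt0 prime_gt0.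
by move/eqP; rewrite eqn_pmul2r ?expn_gt0 ?prime_gt0 // => /eqP.
Qed.

Lemma e_neq0 : (e != 0)%R.
Proof.
rewrite natZ0 pk -{2}(mul1n (p ^ k.-1)) dvdn_pmul2r ?expn_gt0 ?prime_gt0 //.
by rewrite dvdn1; case: (p) pp => // -[].
Qed.

Lemma two_unit : ((2%:R : R) \is a GRing.unit)%R.
Proof.
rewrite unitZpE ?N1 // coprime_pexpl; last lia.
rewrite prime_coprime //; apply/negP => /(dvdn_leq (isT : 0 < 2)) p2.
have := prime_gt1 pp; case: (p) op p2 => [|[|[|]]] //.
Qed.

Variable u : {unit R}.
Hypothesis hu : val u = ((p ^ k.-1 - 1)%:R)%R.

Lemma valu : val u = (e - 1)%R.
Proof. by rewrite hu natrB // expn_gt0 prime_gt0. Qed.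

Lemma pow1e i : ((1 - e) ^+ i = 1 - i%:R * e)%R.
Proof.
elim: i => [|i IH]; first by rewrite expr0 mul0r subr0.
rewrite exprS IH -[i.+1]addn1 natrD.
have -> : ((1 - e) * (1 - i%:R * e) = 1 - (i%:R + 1%:R) * e + i%:R * (e * e))%R by ring.
by rewrite ee0 mulr0 addr0.
Qed.

Lemma valuX i : val (u ^+ i)%g = ((-1) ^+ i * (1 - i%:R * e))%R.
Proof. by rewrite FinRing.val_unitX valu -(opprB 1 e) (exprNn (1 - e)) pow1e. Qed.

Lemma memG (g : {unit R}) : g \in <[u]>%g ->
  exists b : bool, exists c : R, val g = ((-1) ^+ b * (1 + c * e))%R.
Proof.
case/cycleP => i ->; exists (odd i), (- (i%:R))%R.
by rewrite valuX signr_odd mulNr.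
Qed.

Lemma Gmem (b : bool) (c : R) : exists2 g, g \in <[u]>%g & val g = ((-1) ^+ b * (1 + c * e))%R.
Proof.
set i := (p.-1 * val c)%N.
exists (u ^+ (i + p * (b + i)))%g; first exact: mem_cycle.
rewrite valuX -signr_odd.
have -> : odd (i + p * (b + i)) = b.
  by rewrite oddD oddM op oddD /=; case: b; case: (odd i).
congr (_ * _)%R.
rewrite natrD natrM mulrDl mulrAC pe0 mul0r addr0.
have H : ((i%:R + c) * e = 0)%R.
  have -> : (i%:R + c = (p * val c)%:R :> R)%R.
    by rewrite -[c in (_ + c)%R](natrv c) -natrD /i -{2}(mul1n (val c)) -mulnDl addn1 prednK ?prime_gt0.
  by rewrite natrM mulrAC pe0 mul0r.
apply/eqP; rewrite subr_eq -addrA addrC -mulrDl (addrC c) H add0r //.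
Qed.

Definition relb (x y : R) :=
  [exists b : bool, exists c : R, y == (x * ((-1) ^+ b * (1 + c * e)))%R].

Lemma relP x y : reflect (exists b : bool, exists c : R, y = (x * ((-1) ^+ b * (1 + c * e)))%R) (relb x y).
Proof.
apply: (iffP existsP) => [[b /existsP [c /eqP H]]|[b [c H]]]; first by exists b, c.
by exists b; apply/existsP; exists c; apply/eqP.
Qed.

Local Notation G := (<[u]>%g : {set {unit R}}).

Lemma ucosetE r y : (y \in ucoset G r) = relb r y.
Proof.
apply/imsetP/relP => [[g gG ->]|[b [c ->]]].
  by have [b [c ->]] := memG gG; exists b, c.
by have [g gG <-] := Gmem b c; exists g.
Qed.

Lemma rel_refl x : relb x x.
Proof. by apply/relP; exists false, 0%R; rewrite expr0 mul0r addr0 !mulr1. Qed.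

Lemma rel_sym x y : relb x y -> relb y x.
Proof.
case/relP => b [c ->]; apply/relP; exists b, (- c)%R.
have -> : forall s : R, (x * (s * (1 + c * e)) * (s * (1 + - c * e)) = x * (s * s) - x * (s * s) * c * c * (e * e))%R by move=> s; ring.
by rewrite ee0 !mulr0 subr0; case: b; rewrite ?expr0 ?expr1 ?mulrNN !mulr1.
Qed.

Lemma rel_trans x y z : relb x y -> relb y z -> relb x z.
Proof.
case/relP => b [c ->] /relP [b' [c' ->]]; apply/relP; exists (b (+) b'), (c + c')%R.
rewrite signr_addb.
have -> : forall s s' : R, (x * (s * (1 + c * e)) * (s' * (1 + c' * e)) = x * (s * s' * (1 + (c + c') * e)) + x * s * s' * c * c' * (e * e))%R by move=> s s'; ring.
by rewrite ee0 mulr0 addr0.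
Qed.

Lemma ucoset_eq r y : relb r y -> ucoset G r = ucoset G y.
Proof.
move=> ry; apply/setP => z; rewrite !ucosetE; apply/idP/idP => H.
  exact: rel_trans (rel_sym ry) H.
exact: rel_trans ry H.
Qed.

Lemma triv_cosets : trivIset (cosets G).
Proof.
apply/trivIsetP => A B /imsetP [r _ ->] /imsetP [s _ ->] neq.
rewrite -setI_eq0; apply/eqP/setP => y; rewrite !inE !ucosetE.
apply/negbTE/negP => /andP [h1 h2]; move/eqP: neq; apply.
by rewrite (ucoset_eq h1) (ucoset_eq h2).
Qed.

Lemma pblockE x : coset_containing G x = ucoset G x.
Proof.
apply: def_pblock; first exact: triv_cosets.
  by apply/imsetP; exists x.
by rewrite ucosetE rel_refl.
Qed.


Lemma ucoset_in r : ucoset G r \in cosets G.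
Proof. by apply/imsetP; exists r. Qed.

Lemma fdiff (h : {set R} -> 'I_#|cosets G|) :
  {in cosets G &, injective h} -> forall x a : R,
  (coset_index_fun h (x + a)%R == coset_index_fun h x) = relb x (x + a)%R.
Proof.
move=> hinj x a; rewrite /coset_index_fun !pblockE.
apply/eqP/idP => [H | H]; last by rewrite (ucoset_eq H).
have := hinj _ _ (ucoset_in _) (ucoset_in _) H => E.
by rewrite -ucosetE -E ucosetE rel_refl.
Qed.


Lemma fimage (h : {set R} -> 'I_#|cosets G|) :
  {in cosets G &, injective h} ->
  #|[set coset_index_fun h x | x : R]| = #|cosets G|.
Proof.
move=> hinj; have -> : [set coset_index_fun h x | x : R] = h @: cosets G; last exact: card_in_imset.
apply/setP => i; apply/imsetP/imsetP => [[x _ ->]|[C /imsetP [r _ ->] ->]].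
  by exists (ucoset G x); rewrite ?ucoset_in // /coset_index_fun pblockE.
by exists r; rewrite // /coset_index_fun pblockE.
Qed.

Lemma rel_nonunit x y : ~~ (x \is a GRing.unit) -> relb x y = (y == x) || (y == - x)%R.
Proof.
rewrite -xe0 => /eqP xe.
have E b c : (x * ((-1) ^+ b * (1 + c * e)) = (-1) ^+ b * x)%R.
  have -> : (x * ((-1) ^+ b * (1 + c * e)) = (-1) ^+ b * x + (-1) ^+ b * c * (x * e))%R by ring.
  by rewrite xe mulr0 addr0.
apply/relP/orP => [[b [c ->]]|[/eqP ->|/eqP ->]].
- by rewrite E; case: b => /=; [right|left]; rewrite ?expr1 ?expr0 ?mulN1r ?mul1r.
- by exists false, 0%R; rewrite E expr0 mul1r.
- by exists true, 0%R; rewrite E expr1 mulN1r.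
Qed.

Lemma two_cancel (y : R) : (y + y = 0 -> y = 0)%R.
Proof.
by move=> H; rewrite -(mulKr two_unit y) mulr_natl [(y *+ 2)%R]mulr2n H mulr0.
Qed.

Lemma csize_nonunit x : ~~ (x \is a GRing.unit) -> x != 0%R -> #|ucoset G x| = 2.
Proof.
move=> nu nz.
have -> : ucoset G x = [set x; - x]%R.
  by apply/setP => y; rewrite ucosetE rel_nonunit // !inE.
rewrite cards2; case: eqP => // H; exfalso; move/eqP: nz; apply.
by apply: two_cancel; rewrite {1}H addNr.
Qed.

Lemma csize0 : #|ucoset G 0%R| = 1.
Proof.
have -> : ucoset G 0%R = [set 0%R].
  by apply/setP => y; rewrite ucosetE rel_nonunit ?unitr0 // !inE oppr0 orbb.
by rewrite cards1.
Qed.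


Lemma ce_mod (c : R) : (c * e = (val c %% p)%:R * e)%R.
Proof.
rewrite -{1}(natrv c) {1}(divn_eq (val c) p) natrD natrM mulrDl.
by rewrite -mulrA pe0 mulr0 add0r.
Qed.

Lemma e_cancel2 : (e + e != 0)%R.
Proof. by apply/negP => /eqP /two_cancel /eqP; apply/negP; apply: e_neq0. Qed.

Lemma key_neq (c c' : R) : (1 + c * e != - (1 + c' * e))%R.
Proof.
apply/negP => /eqP H.
have : ((1 + c * e + (1 + c' * e)) * e = 0)%R by rewrite H addNr mul0r.
have -> : ((1 + c * e + (1 + c' * e)) * e = e + e + (c + c') * (e * e))%R by ring.
by rewrite ee0 mulr0 addr0; apply/eqP; apply: e_cancel2.
Qed.

Lemma sign_inj (b b' : bool) (t t' : 'I_p) :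
  ((-1) ^+ b * (1 + (t : nat)%:R * e) = (-1) ^+ b' * (1 + (t' : nat)%:R * e))%R ->
  (b, t) = (b', t').
Proof.
have fin (b0 : bool) (t1 t2 : 'I_p) : ((t1 : nat)%:R * e = (t2 : nat)%:R * e)%R -> (b0, t1) = (b0, t2).
  by move/te_inj => /(_ (ltn_ord t1) (ltn_ord t2)) /val_inj ->.
case: b; case: b' => /=; rewrite ?expr1 ?expr0 ?mulN1r ?mul1r.
- by move/oppr_inj/addrI/fin.
- by move=> H; exfalso; move/eqP: (key_neq (t'%:R)%R (t%:R)%R); apply; rewrite -H.
- by move=> H; exfalso; move/eqP: (key_neq (t%:R)%R (t'%:R)%R); apply.
- by move/addrI/fin.
Qed.

Lemma csize_unit x : x \is a GRing.unit -> #|ucoset G x| = (2 * p)%N.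
Proof.
move=> ux.
have -> : ucoset G x = [set (x * ((-1) ^+ bt.1 * (1 + (bt.2 : nat)%:R * e)))%R | bt : bool * 'I_p].
  apply/setP => y; rewrite ucosetE; apply/relP/imsetP => [[b [c ->]]|[[b t] _ ->]].
    exists (b, Ordinal (ltn_pmod (val c) (prime_gt0 pp))) => //=.
    by rewrite ce_mod.
  by exists b, ((t : nat)%:R)%R.
rewrite card_imset; first by rewrite card_prod card_bool card_ord.
move=> [b t] [b' t'] /= H; apply: sign_inj.
by rewrite -(mulKr ux (_ * (1 + _)))%R H mulKr.
Qed.

Lemma csize_dvd r : #|ucoset G r| %| 2 * p.
Proof.
have [ur|nur] := boolP (r \is a GRing.unit); first by rewrite csize_unit.
have [->|nz] := eqVneq r 0%R; first by rewrite csize0.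
by rewrite csize_nonunit // dvdn_mulr.
Qed.


Lemma sum_w : \sum_(x : R) (2 * p %/ #|ucoset G x|) = #|cosets G| * (2 * p).
Proof.
rewrite (eq_bigl (fun x => x \in [set: R])); last by move=> x; rewrite in_setT.
rewrite (partition_big_imset (ucoset G)) /=.
have -> : [set ucoset G x | x in [set: R]] = cosets G.
  by apply/setP => C; apply/imsetP/imsetP => [[x _ ->]|[x _ ->]]; exists x.
rewrite -sum_nat_const; apply: eq_bigr => C /imsetP [r _ ->].
rewrite (eq_bigl (fun i => i \in ucoset G r)); last first.
  move=> i; rewrite in_setT /= ucosetE; apply/eqP/idP => [E|ri].
    by rewrite -ucosetE -E ucosetE rel_refl.
  by rewrite (ucoset_eq ri).
rewrite (eq_bigr (fun _ => 2 * p %/ #|ucoset G r|)); last first.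
  by move=> i ri; rewrite ucosetE in ri; rewrite (ucoset_eq ri).
by rewrite sum_nat_const mulnC divnK // csize_dvd.
Qed.

Lemma units_card : #|[set x : R | x \is a GRing.unit]| = totient (p ^ k).
Proof.
have -> : [set x : R | x \is a GRing.unit] = [set val g | g : {unit R}].
  apply/setP => x; rewrite inE; apply/idP/imsetP => [ux|[g _ ->]].
    by exists (FinRing.Unit ux).
  exact: valP.
rewrite card_imset; last exact: val_inj.
by rewrite -card_units_Zp ?expn_gt0 ?prime_gt0 // /units_Zp cardsT.
Qed.

Lemma sumb (T : finType) (P : pred T) : \sum_(x : T) (P x : nat) = #|P|.
Proof.
rewrite -sum1_card [RHS]big_mkcond /=; apply: eq_bigr => x _.
by rewrite unfold_in; case: (P x).
Qed.

Lemma sum_w2 : \sum_(x : R) (2 * p %/ #|ucoset G x|) =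
   totient (p ^ k) + p * (p ^ k - totient (p ^ k)) + p.
Proof.
rewrite (eq_bigr (fun x : R => (x \is a GRing.unit : nat) + p * (~~ (x \is a GRing.unit) : nat) + p * (x == 0%R : nat))); last first.
  move=> x _.
  have [ux|nux] := boolP (x \is a GRing.unit).
    rewrite csize_unit // divnn muln_gt0 (prime_gt0 pp) /=.
    have -> : (x == 0%R) = false by apply/negbTE; apply: contraTneq ux => ->; rewrite unitr0.
    by rewrite /= !muln0.
  have [->|nz] := eqVneq x 0%R; first by rewrite csize0 divn1 /=; lia.
  by rewrite csize_nonunit // mulKn //=; lia.
rewrite !big_split /= -!big_distrr /= !sumb.
have -> : #|(fun x : R => x \is a GRing.unit)| = totient (p ^ k).
  by rewrite -units_card; apply: eq_card => x; rewrite inE.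
have -> : #|(fun x : R => ~~ (x \is a GRing.unit))| = p ^ k - totient (p ^ k).
  have cR : #|R| = p ^ k by rewrite card_ord Zp_cast // N1.
  have H := cardC [set x : R | x \is a GRing.unit]; rewrite units_card cR in H.
  have E (a b c : nat) : a + b = c -> b = c - a by lia.
  rewrite -(E _ _ _ H); apply: eq_card => x; rewrite !inE //.
have -> : #|(fun x : R => x == 0%R)| = 1.
  by rewrite -(card1 (0%R : R)); apply: eq_card => x; rewrite !inE.
by rewrite muln1.
Qed.


Lemma arith (C : nat) :
  C * (2 * p) = totient (p ^ k) + p * (p ^ k - totient (p ^ k)) + p ->
  C = (2 * p ^ k.-1 - p ^ (k - 2) + 1) %/ 2.
Proof.
rewrite totient_pfactor //; last lia.
have e1 : p ^ k.-1 = p * p ^ (k - 2) by rewrite -expnS; congr (_ ^ _); lia.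
have e2 : p ^ k = p * (p * p ^ (k - 2)) by rewrite -e1 -expnS; congr (_ ^ _); lia.
rewrite e1 e2; move: (p ^ (k - 2)) => P.
have := prime_gt0 pp; case: p => // q _ /=.
have -> : q.+1 * (q.+1 * P) - q * (q.+1 * P) = q.+1 * P.
  by rewrite -mulnBl subSnn mul1n.
have -> : q * (q.+1 * P) + q.+1 * (q.+1 * P) + q.+1 = q.+1 * (q * P + q.+1 * P + 1) by ring.
move=> H0; have H : C * 2 = q * P + q.+1 * P + 1.
  by apply/eqP; rewrite -(eqn_pmul2l (ltn0Sn q)) -H0; apply/eqP; ring.
have -> : 2 * (q.+1 * P) - P + 1 = C * 2 by rewrite H; nia.
by rewrite mulnK.
Qed.


Lemma relA x a : relb x (x + a)%R <->
  (exists c, a = x * c * e)%R \/ (exists c, a = - (x * (2%:R + c * e)))%R.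
Proof.
split.
  case/relP => -[] [c H] /=; [right|left]; exists c;
   (have -> : a = (x + a - x)%R by ring); rewrite H /=; rewrite ?expr1 ?expr0; ring.
case=> -[c H]; apply/relP; [exists false, c | exists true, c]; rewrite /= ?expr1 ?expr0 H; ring.
Qed.

Lemma unit2e (c : R) : ((2%:R + c * e) \is a GRing.unit)%R.
Proof.
have H : ((2%:R + c * e) * (2%:R - c * e) = 2%:R * 2%:R)%R.
  have -> : ((2%:R + c * e) * (2%:R - c * e) = 2%:R * 2%:R - c * c * (e * e) :> R)%R by ring.
  by rewrite ee0 mulr0 subr0.
have : ((2%:R + c * e) * (2%:R - c * e) \is a GRing.unit)%R by rewrite H unitrM two_unit.
by rewrite unitrM => /andP [].
Qed.


Lemma card_unit_a a : a \is a GRing.unit ->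
  #|[set x : R | relb x (x + a)%R]| = p.
Proof.
move=> ua.
have ua' : (- a \is a GRing.unit)%R by rewrite unitrN.
have -> : [set x : R | relb x (x + a)%R] =
          [set (- a / (2%:R + (t : nat)%:R * e))%R | t : 'I_p].
  apply/setP => x; rewrite inE; apply/idP/imsetP.
    case/relA => -[c H].
      have : (a * e == 0)%R by rewrite H -!mulrA ee0 !mulr0.
      by rewrite xe0 ua.
    exists (Ordinal (ltn_pmod (val c) (prime_gt0 pp))) => //=.
    by rewrite -ce_mod H opprK mulrK // unit2e.
  case=> t _ ->; apply/relA; right; exists ((t : nat)%:R)%R.
  by rewrite divrK ?unit2e // opprK.
rewrite card_imset ?card_ord // => t t' /= H.
apply: val_inj; apply: te_inj; rewrite ?ltn_ord //.
have : ((2%:R + (t : nat)%:R * e)^-1 = (2%:R + (t' : nat)%:R * e)^-1 :> R)%R.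
  by rewrite -(mulKr ua' (_^-1)%R) H mulKr.
by move/invr_inj/addrI.
Qed.


Lemma rel_half (a : R) : relb (- (a / 2%:R))%R (- (a / 2%:R) + a)%R.
Proof.
apply/relA; right; exists 0%R.
by rewrite mul0r addr0 mulNr opprK divrK // two_unit.
Qed.

Lemma half_nonunit (a : R) : ~~ (a \is a GRing.unit) -> ~~ (- (a / 2%:R) \is a GRing.unit)%R.
Proof.
move=> nua; rewrite unitrN; apply: contra nua => H.
by rewrite -(divrK two_unit a) unitrM H two_unit.
Qed.

Lemma case2 (x a : R) : ~~ (a \is a GRing.unit) ->
  (exists c, a = - (x * (2%:R + c * e)))%R -> x = (- (a / 2%:R))%R.
Proof.
move=> nua [c H].
have nux : ~~ (x \is a GRing.unit).
  apply: contra nua => ux; by rewrite H unitrN unitrM ux unit2e.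
move: nux; rewrite -xe0 => /eqP xe.
have -> : a = (- (x * 2%:R))%R.
  by rewrite H mulrDr mulrA (mulrC x c) -mulrA xe mulr0 addr0.
by rewrite mulNr mulrK ?two_unit // opprK.
Qed.

Lemma card_nonunit_gen (a : R) : ~~ (a \is a GRing.unit) ->
  ~ (exists s, a = s * e)%R ->
  #|[set x : R | relb x (x + a)%R]| = 1.
Proof.
move=> nua ne.
have -> : [set x : R | relb x (x + a)%R] = [set (- (a / 2%:R))%R].
  apply/setP => x; rewrite !inE; apply/idP/eqP => [|->]; last exact: rel_half.
  case/relA => H; last exact: case2.
  by exfalso; apply: ne; case: H => c ->; exists (x * c)%R.
by rewrite cards1.
Qed.

Lemma card_nonunit_e (a s : R) : a = (s * e)%R -> a != 0%R ->
  #|[set x : R | relb x (x + a)%R]| = (totient (p ^ k)).+1.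
Proof.
move=> ha nz.
have nua : ~~ (a \is a GRing.unit) by rewrite -xe0 ha -mulrA ee0 mulr0.
have -> : [set x : R | relb x (x + a)%R] = (- (a / 2%:R))%R |: [set x : R | x \is a GRing.unit].
  apply/setP => x; rewrite !inE; apply/idP/orP.
    case/relA => H; last by left; apply/eqP; apply: case2.
    right; apply: contraR nz; rewrite -xe0 => /eqP xe.
    by case: H => c ->; rewrite -mulrA (mulrC c) mulrA xe mul0r.
  case=> [/eqP ->|ux]; first exact: rel_half.
  apply/relA; left; exists (s * x^-1)%R.
  by rewrite mulrCA mulrV // mulr1.
rewrite cardsU1 units_card inE.
by rewrite (negbTE (half_nonunit nua)).
Qed.


Lemma main_sec (h : {set R} -> 'I_#|cosets G|) :
  {in cosets G &, injective h} ->
  zero_difference (coset_index_fun h) (p ^ k)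
    ((2 * p ^ k.-1 - p ^ (k - 2) + 1) %/ 2)
    (mem [:: 1; p; p ^ k - p ^ k.-1 + 1]).
Proof.
move=> hinj; split.
- by rewrite card_ord Zp_cast // N1.
- by rewrite fimage //; symmetry; apply: arith; rewrite -sum_w sum_w2.
move=> a nz.
have -> : [set x : R | coset_index_fun h (x + a)%R == coset_index_fun h x] = [set x : R | relb x (x + a)%R].
  by apply/setP => x; rewrite !inE fdiff.
have [ua|nua] := boolP (a \is a GRing.unit).
  by rewrite card_unit_a //= !inE eqxx orbT.
have [/existsP [s /eqP hs]|nes] := boolP [exists s : R, a == (s * e)%R].
  rewrite (card_nonunit_e hs nz) totient_pfactor //; last lia.
  have -> : p.-1 * p ^ k.-1 = p ^ k - p ^ k.-1.
    by rewrite -subn1 mulnBl mul1n -expnS prednK //; lia.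
  by rewrite addn1 /= !inE eqxx !orbT.
rewrite card_nonunit_gen //= ?inE ?eqxx //.
by case=> s hs; move/existsP: nes; apply; exists s; rewrite hs.
Qed.

End S.

Theorem theorem3p6 (p k : nat) (u : {unit 'Z_(p ^ k)})
    (h : {set 'Z_(p ^ k)} -> 'I_#|cosets <[u]>%g|) :
  prime p -> odd p -> 2 < k ->
  val u = ((p ^ k.-1 - 1)%:R)%R ->
  {in cosets <[u]>%g &, injective h} ->
  zero_difference (coset_index_fun h) (p ^ k)
    ((2 * p ^ k.-1 - p ^ (k - 2) + 1) %/ 2)
    (mem [:: 1; p; p ^ k - p ^ k.-1 + 1]).
Proof.
move=> pp op k2 hu hinj.
exact: (main_sec pp op k2 hu hinj).
Qed.
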